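(* In the setting described in the context, suppose Conditions (C1) and (C2) hold, the correction functions have radius $\rho<1$, and $F(x,\theta,\xi)\in\{-1,+1\}$ for all $x\in\mathcal{X}$. Then for all $x\in\mathcal{X}$, $$m_F\big((\theta,\xi),x,\mathbf{1}(F(x,\theta,\xi)\ge0)\big)\ge\min\Big\{\tfrac{B}{\kappa_0},\tfrac{\rho}{\kappa_0},\sigma_\theta,\sigma_\xi,\tfrac{1}{2\kappa_\theta},\tfrac{\rho}{2\kappa_\theta B},\tfrac{\sigma_h}{2\kappa_\xi B},\tfrac{\rho}{4B\kappa_h\kappa_\xi},\tfrac{1}{4\kappa_h\kappa_\xi}\Big\}.$$ Moreover, for any layer-based weight-shared model $F'(x,\theta')=F(x,\tau^{(1)}(\theta'),\tau^{(2)}(\theta'))$ with $\tau^{(1)}(\theta')=\theta$, $\tau^{(2)}(\theta')=\xi$, the same lower bound holds for $m_{F'}(\theta',x,\mathbf{1}(F'(x,\theta')\ge0))$.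
   Context: Architecture: layer functions $f_0:\mathcal{X}\times\Theta_0\to\mathbb{R}^d$, $f_i:(\mathbb{R}^d)^i\times\Theta_i\to\mathbb{R}^d$ for $1\le i<L$, $f_L:(\mathbb{R}^d)^L\times\Theta_L\to\mathbb{R}$; $\theta=(\theta_0,\dots,\theta_L)$; $h_0(x,\theta)=f_0(x,\theta_0)$, $h_i(x,\theta)=f_i(h_0(x,\theta),\dots,h_{i-1}(x,\theta),\theta_i)$. Correction functions: $c_0,\dots,c_{L-1}:\mathbb{R}^d\times\Xi_i\to\mathbb{R}^d$ with parameters $\xi=(\xi_0,\dots,\xi_{L-1})$ have radius $\rho$ if for all $0\le i\le L-1$, $x\in\mathcal{X}$ and $\hat h\in\mathbb{R}^d$ with $\|\hat h-h_i(x,\theta)\|_2\le\rho$, $c_i(\hat h,\xi_i)=h_i(x,\theta)$. Corrected model: $g_0(x,\theta,\xi)=f_0(x,\theta_0)$; $\tilde h_i(x,\theta,\xi)=c_i(g_i(x,\theta,\xi),\xi_i)$ for $0\le i\le L-1$; $g_i(x,\theta,\xi)=f_i(\tilde h_0(x,\theta,\xi),\dots,\tilde h_{i-1}(x,\theta,\xi),\theta_i)$ for $1\le i\le L$; $F(x,\theta,\xi)=g_L(x,\theta,\xi)$ (so $F(x,\theta,\xi)=h_L(x,\theta)$ on $\mathcal{X}$). Norm on tuples: $|||(v_1,\dots,v_i)|||=\max_j\|v_j\|_2$. Niceness: $f(\cdot,\theta)$ is $(\kappa_\theta,\kappa_h,\sigma_h,\sigma_\theta)$-nice on a set $\mathcal{H}$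 if for all $\hat\theta$ with $\|\theta-\hat\theta\|_2\le\sigma_\theta$ and all $h\in\mathcal{H}$: $\|f(h,\theta)-f(h,\hat\theta)\|_2\le\kappa_\theta\|\theta-\hat\theta\|_2\max\{|||h|||,1\}$, and for all $\hat h$ with $|||h-\hat h|||\le\sigma_h$: $\|f(h,\hat\theta)-f(\hat h,\hat\theta)\|_2\le\kappa_h|||h-\hat h|||$. Condition (C1): for each $i\ge1$, $f_i(\cdot,\theta_i)$ is $(\kappa_\theta,\kappa_h,\sigma_h,\sigma_\theta)$-nice on $\{(h_0(x,\theta),\dots,h_{i-1}(x,\theta)):x\in\mathcal{X}\}$; $\|f_0(x,\theta_0)-f_0(x,\hat\theta_0)\|_2\le\kappa_0\|\theta_0-\hat\theta_0\|_2$ for all $x\in\mathcal{X}$ and all $\hat\theta_0$; and for each $i$, $\|c_i(h,\xi_i)-c_i(h,\hat\xi)\|_2\le\kappa_\xi\max\{\|h\|_2,1\}\|\xi_i-\hat\xi\|_2$ for all $h\in\mathbb{R}^d$ and all $\hat\xi$ with $\|\xi_i-\hat\xi\|_2\le\sigma_\xi$. Condition (C2): $\max\{\|h_i(x,\theta)\|_2,1\}\le B$ for all $0\le i\le L$ and $x\in\mathcal{X}$. All-layer margin of an architecture $F$ with parameter vector $\vartheta$: $m_F(\vartheta,x,y)=\min\{\|\delta\|_2:(y-0.5)F(x,\vartheta+\delta)\le0\}$ for $y\in\{0,1\}$. Layer-based weight sharing: $\theta'\in\mathbb{R}^{d'}$, and each component map $\tau^{(1)}_i$ (producing $\theta_i$)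 and $\tau^{(2)}_i$ (producing $\xi_i$) has the form $\theta'\mapsto(\theta'_{\pi_1},\dots,\theta'_{\pi_{b}})$ for distinct indices $\pi_1,\dots,\pi_b\in[d']$ (no coordinate of $\theta'$ is duplicated within one layer). *)

(* Defs.v *)
From HB Require Import structures.
From mathcomp Require Import all_boot all_order all_algebra.
From mathcomp Require Import all_classical reals constructive_ereal ereal.
Unset Printing Implicit Defensive.
Import Order.TTheory GRing.Theory Num.Theory.
Local Open Scope ring_scope.
Local Open Scope classical_set_scope.

Definition norm2 {R : realType} {n : nat} (v : 'rV[R]_n) : R :=
  Num.sqrt (\sum_(j < n) v 0 j ^+ 2).

Definition tnorm {R : realType} {d n : nat} (H : 'I_n -> 'rV[R]_d) : R :=
  \big[Num.max/0]_(j < n) norm2 (H j).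

Definition tsub {R : realType} {d n : nat} (H H' : 'I_n -> 'rV[R]_d) : 'I_n -> 'rV[R]_d :=
  fun j => H j - H' j.

(** Families of parameter vectors theta_i in R^(r i); only indices 0..L
    (resp. 0..L-1) are ever used. *)
Definition Params (R : realType) (r : nat -> nat) := forall i : nat, 'rV[R]_(r i).

Section Arch.
Variables (R : realType) (X : Type) (d L : nat) (p q : nat -> nat).
Variable f0 : X -> 'rV[R]_(p 0) -> 'rV[R]_d.
Variable fm : forall i : nat, ('I_i -> 'rV[R]_d) -> 'rV[R]_(p i) -> 'rV[R]_d.
Variable fL : ('I_L -> 'rV[R]_d) -> 'rV[R]_(p L) -> R.
Variable c : forall i : nat, 'rV[R]_d -> 'rV[R]_(q i) -> 'rV[R]_d.

Definition layer (x : X) (th : Params R p) (n : nat) :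
  ('I_n -> 'rV[R]_d) -> 'rV[R]_d :=
  match n as n0 return ('I_n0 -> 'rV[R]_d) -> 'rV[R]_d with
  | 0 => fun _ => f0 x (th 0%N)
  | k.+1 => fun H => fm k.+1 H (th k.+1)
  end.

(** states post n = (v_0,...,v_{n-1}) with v_k = post k (layer k (v_0..v_{k-1})). *)
Fixpoint states (x : X) (th : Params R p) (post : nat -> 'rV[R]_d -> 'rV[R]_d)
  (n : nat) : 'I_n -> 'rV[R]_d :=
  match n as n0 return 'I_n0 -> 'rV[R]_d with
  | 0 => fun _ => 0
  | k.+1 => fun j =>
      match unlift ord_max j with
      | Some i => states x th post k i
      | None => post k (layer x th k (states x th post k))
      end
  end.

Definition hstates (x : X) (th : Params R p) (n : nat) : 'I_n -> 'rV[R]_d :=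
  states x th (fun _ v => v) n.
Definition h (x : X) (th : Params R p) (i : nat) : 'rV[R]_d :=
  layer x th i (hstates x th i).
Definition hL (x : X) (th : Params R p) : R := fL (hstates x th L) (th L).

Definition cstates (x : X) (th : Params R p) (xi : Params R q) (n : nat) :
  'I_n -> 'rV[R]_d := states x th (fun i v => c i v (xi i)) n.
Definition Fcorr (x : X) (th : Params R p) (xi : Params R q) : R :=
  fL (cstates x th xi L) (th L).

Definition full_norm (v : Params R p * Params R q) : R :=
  Num.sqrt (\sum_(i < L.+1) norm2 (v.1 i) ^+ 2 + \sum_(i < L) norm2 (v.2 i) ^+ 2).

Definition full_add (v w : Params R p * Params R q) : Params R p * Params R q :=
  (fun i => v.1 i + w.1 i, fun i => v.2 i + w.2 i).

(** Layer-based weight sharing: theta_i = (theta'_{pi_1},...,theta'_{pi_b}). *)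
Definition tau1 (d' : nat) (pi1 : forall i : nat, 'I_(p i) -> 'I_d')
  (th' : 'rV[R]_d') : Params R p := fun i => \row_k th' 0 (pi1 i k).
Definition tau2 (d' : nat) (pi2 : forall i : nat, 'I_(q i) -> 'I_d')
  (th' : 'rV[R]_d') : Params R q := fun i => \row_k th' 0 (pi2 i k).
End Arch.

(** (kappa_th,kappa_h,sigma_h,sigma_th)-niceness of f(.,th) on the set Hs of
    tuples; dist is the output distance (Euclidean, or |.| for real outputs). *)
Definition nice {R : realType} {d n m : nat} {Y : Type} (dist : Y -> Y -> R)
  (f : ('I_n -> 'rV[R]_d) -> 'rV[R]_m -> Y) (th : 'rV[R]_m)
  (k_th k_h s_h s_th : R) (Hs : set ('I_n -> 'rV[R]_d)) : Prop :=
  forall thh : 'rV[R]_m, norm2 (th - thh) <= s_th ->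
  forall H, Hs H ->
    dist (f H th) (f H thh) <= k_th * norm2 (th - thh) * Num.max (tnorm H) 1 /\
    (forall Hh, tnorm (tsub H Hh) <= s_h ->
       dist (f H thh) (f Hh thh) <= k_h * tnorm (tsub H Hh)).

Definition all_layer_margin {R : realType} {X V : Type} (add : V -> V -> V)
  (nrm : V -> R) (G : X -> V -> R) (vt : V) (x : X) (y : bool) : \bar R :=
  ereal_inf [set (nrm delta)%:E | delta in
               [set delta | ((nat_of_bool y)%:R - 2^-1) * G x (add vt delta) <= 0]].

(* Main.v *)
Require Import Defs.
From HB Require Import structures.
From mathcomp Require Import all_boot all_order all_algebra.
From mathcomp Require Import all_classical reals constructive_ereal ereal.
From mathcomp Require Import ring lra.
Import Order.TTheory GRing.Theory Num.Theory.
Local Open Scope ring_scope.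
Local Open Scope classical_set_scope.

Section N2.
Variables (R : realType) (n : nat).
Implicit Types (u v : 'rV[R]_n).

Lemma cauchy_schwarz (a b : 'I_n -> R) :
  (\sum_j a j * b j) ^+ 2 <= (\sum_j a j ^+ 2) * (\sum_j b j ^+ 2).
Proof.
set A := \sum_j a j ^+ 2; set Bs := \sum_j b j ^+ 2; set C := \sum_j a j * b j.
have key t : 0 <= A * t ^+ 2 + 2 * C * t + Bs.
  have -> : A * t ^+ 2 + 2 * C * t + Bs = \sum_j (a j * t + b j) ^+ 2.
    rewrite (eq_bigr (fun j => a j ^+ 2 * t ^+ 2 + 2 * (a j * b j) * t + b j ^+ 2)).
      by rewrite !big_split /= -!mulr_suml -mulr_sumr.
    by move=> j _; ring.
  by apply: sumr_ge0 => j _; rewrite sqr_ge0.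
have A0 : 0 <= A by apply: sumr_ge0 => j _; rewrite sqr_ge0.
have B0 : 0 <= Bs by apply: sumr_ge0 => j _; rewrite sqr_ge0.
have [A00|Ap] := eqVneq A 0.
  have a0 j : a j = 0.
    apply/eqP; rewrite -sqrf_eq0; apply/eqP.
    by apply: (psumr_eq0P _ A00) => // i _; rewrite sqr_ge0.
  by rewrite /C big1 ?A00 ?expr0n ?mul0r //= => j _; rewrite a0 mul0r.
have Apos : 0 < A by rewrite lt_def Ap A0.
have h := mulr_ge0 A0 (key (- C / A)).
have e : A * (A * (- C / A) ^+ 2 + 2 * C * (- C / A) + Bs) = A * Bs - C ^+ 2.
  by field.
rewrite e in h; lra.
Qed.
End N2.
Section N3.
Variables (R : realType) (n : nat).
Implicit Types (u v : 'rV[R]_n).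

Lemma norm2_ge0 v : 0 <= norm2 v.
Proof. exact: sqrtr_ge0. Qed.

Lemma sum_sq_ge0 v : 0 <= \sum_(j < n) v 0 j ^+ 2.
Proof. by apply: sumr_ge0 => j _; rewrite sqr_ge0. Qed.

Lemma norm2_sq v : norm2 v ^+ 2 = \sum_(j < n) v 0 j ^+ 2.
Proof. by rewrite /norm2 sqr_sqrtr // sum_sq_ge0. Qed.

Lemma norm2N v : norm2 (- v) = norm2 v.
Proof. by rewrite /norm2; congr Num.sqrt; apply: eq_bigr => j _; rewrite mxE sqrrN. Qed.

Lemma norm2B u v : norm2 (u - v) = norm2 (v - u).
Proof. by rewrite -norm2N opprB. Qed.

Lemma norm2D u v : norm2 (u + v) <= norm2 u + norm2 v.
Proof.
have cs := @cauchy_schwarz R n (fun j => u 0 j) (fun j => v 0 j).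
set C := \sum_j u 0 j * v 0 j in cs.
have hC : C <= norm2 u * norm2 v.
  rewrite /norm2 -sqrtrM ?sum_sq_ge0 //.
  apply: (le_trans (ler_norm C)); rewrite -sqrtr_sqr.
  exact: ler_wsqrtr.
have hS : \sum_(j < n) (u + v) 0 j ^+ 2 <= (norm2 u + norm2 v) ^+ 2.
  have -> : \sum_(j < n) (u + v) 0 j ^+ 2 =
      \sum_(j < n) u 0 j ^+ 2 + 2 * C + \sum_(j < n) v 0 j ^+ 2.
    rewrite /C mulr_sumr -!big_split /=; apply: eq_bigr => j _.
    by rewrite mxE; ring.
  rewrite -!norm2_sq; have := norm2_ge0 u; have := norm2_ge0 v; nra.
rewrite /norm2 -[X in _ <= X]ger0_norm ?addr_ge0 ?norm2_ge0 //.
rewrite -sqrtr_sqr; exact: ler_wsqrtr.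
Qed.

Lemma norm2_tri u v w : norm2 (u - w) <= norm2 (u - v) + norm2 (v - w).
Proof. by have := norm2D (u - v) (v - w); rewrite addrA subrK. Qed.

End N3.
Arguments norm2_ge0 {R n}. Arguments norm2N {R n}. Arguments norm2B {R n}.
Arguments norm2D {R n}. Arguments norm2_tri {R n}.
Section St.
Variables (R : realType) (X : Type) (d : nat) (p : nat -> nat).
Variable f0 : X -> 'rV[R]_(p 0) -> 'rV[R]_d.
Variable fm : forall i : nat, ('I_i -> 'rV[R]_d) -> 'rV[R]_(p i) -> 'rV[R]_d.

Lemma states_nth x th post n (j : 'I_n) :
  states R X d p f0 fm x th post n j =
  post j (layer R X d p f0 fm x th j (states R X d p f0 fm x th post j)).
Proof.
elim: n j => [|k IH] j; first by case: j.
rewrite /=; case: unliftP => [i ->|->].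
  rewrite IH; have -> : nat_of_ord (lift ord_max i) = nat_of_ord i.
    by rewrite /= /bump leqNgt ltn_ord.
  by [].
by [].
Qed.
End St.
Lemma mul3 (R : realFieldType) (k a M e B : R) : 0 <= k -> 0 <= a -> a <= e ->
  0 <= M -> M <= B -> k * a * M <= k * e * B.
Proof.
move=> kk a0 ae M0 MB; apply: ler_pM => //; first exact: mulr_ge0.
exact: ler_wpM2l.
Qed.

Section Core.
Variables (R : realType) (X : Type) (d L : nat) (p q : nat -> nat).
Variable f0 : X -> 'rV[R]_(p 0%N) -> 'rV[R]_d.
Variable fm : forall i : nat, ('I_i -> 'rV[R]_d) -> 'rV[R]_(p i) -> 'rV[R]_d.
Variable fL : ('I_L -> 'rV[R]_d) -> 'rV[R]_(p L) -> R.
Variable c : forall i : nat, 'rV[R]_d -> 'rV[R]_(q i) -> 'rV[R]_d.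
Variables (th : Params R p) (xi : Params R q).
Variables (k0 k_th k_h k_xi s_h s_th s_xi B rho : R).
Let hv := h R X d p f0 fm.
Let hst := hstates R X d p f0 fm.
Hypothesis Hnice : forall i : nat, (1 <= i < L)%N ->
     nice (fun a b => norm2 (a - b)) (fm i) (th i) k_th k_h s_h s_th
          (range (fun x => hst x th i)).
Hypothesis HniceL : nice (fun a b : R => `|a - b|) fL (th L) k_th k_h s_h s_th
       (range (fun x => hst x th L)).
Hypothesis Hf0 : forall (x : X) (th0h : 'rV[R]_(p 0%N)),
     norm2 (f0 x (th 0%N) - f0 x th0h) <= k0 * norm2 (th 0%N - th0h).
Hypothesis Hc : forall i : nat, (i < L)%N -> forall (v : 'rV[R]_d) (xih : 'rV[R]_(q i)),
     norm2 (xi i - xih) <= s_xi ->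
     norm2 (c i v (xi i) - c i v xih) <= k_xi * Num.max (norm2 v) 1 * norm2 (xi i - xih).
Hypothesis HB : forall x : X, (forall i : nat, (i < L)%N -> Num.max (norm2 (hv x th i)) 1 <= B).
Hypothesis Hrad : forall i : nat, (i < L)%N -> forall (x : X) (v : 'rV[R]_d),
     norm2 (v - hv x th i) <= rho -> c i v (xi i) = hv x th i.
Hypotheses (Hrho1 : rho < 1) (HB1 : 1 <= B) (Hk0 : 0 < k0) (Hkth : 0 < k_th)
  (Hkh : 0 < k_h) (Hkxi : 0 < k_xi).
Variables (x : X) (th2 : Params R p) (xi2 : Params R q) (e : R).
Hypotheses (He0 : 0 <= e) (Hek0 : k0 * e <= rho) (Heth : e <= s_th) (Hexi : e <= s_xi)
  (Hekth : k_th * e * B <= rho / 2) (Hesh : 2 * k_xi * B * e <= s_h)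
  (Hekh : k_h * (2 * k_xi * B * e) <= rho / 2).
Hypothesis Hth2 : forall i, (i <= L)%N -> norm2 (th i - th2 i) <= e.
Hypothesis Hxi2 : forall i, (i < L)%N -> norm2 (xi i - xi2 i) <= e.

Ltac prep := move: (Hrho1) (HB1) (Hk0) (Hkth) (Hkh) (Hkxi) (He0) (Hek0) (Heth)
  (Hexi) (Hekth) (Hesh) (Hekh) => ? ? ? ? ? ? ? ? ? ? ? ? ?.

Let E := 2 * k_xi * B * e.
Let S' := cstates R X d p q f0 fm c x th2 xi2.
Let g (m : nat) := c m (layer R X d p f0 fm x th2 m (S' m)) (xi2 m).

Lemma hst_nth n (j : 'I_n) : hst x th n j = hv x th j.
Proof. by rewrite /hst /hstates states_nth. Qed.

Lemma S'_nth n (j : 'I_n) : S' n j = g j.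
Proof. by rewrite /S' /cstates states_nth. Qed.

Lemma E0 : 0 <= E.
Proof. prep; rewrite /E; apply: mulr_ge0 => //; apply: mulr_ge0; last lra.
  apply: mulr_ge0; lra. Qed.

Lemma mul3_le (k a M : R) : 0 <= k -> 0 <= a -> a <= e -> 0 <= M -> M <= B ->
  k * a * M <= k * e * B.
Proof.
move=> kk a0 ae M0 MB; apply: ler_pM => //; first exact: mulr_ge0.
exact: ler_wpM2l.
Qed.

Lemma max1_ge0 (t : R) : 0 <= Num.max t 1.
Proof. by rewrite le_max ler01 orbT. Qed.

Lemma tnorm_hst n : (n <= L)%N -> tnorm (hst x th n) <= B.
Proof.
move=> nL; apply: bigmax_le; first by prep; lra.
move=> j _; rewrite hst_nth; apply: (le_trans _ (HB x j (leq_trans (ltn_ord j) nL))).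
by rewrite le_max lexx.
Qed.

Lemma max_tnorm n : (n <= L)%N -> Num.max (tnorm (hst x th n)) 1 <= B.
Proof. by move=> nL; rewrite ge_max tnorm_hst //= HB1. Qed.

Lemma tn_all m : (m <= L)%N -> (forall j, (j < m)%N -> norm2 (hv x th j - g j) <= E) ->
  tnorm (tsub (hst x th m) (S' m)) <= E.
Proof.
move=> mL IH; apply: bigmax_le; first exact: E0.
by move=> j _; rewrite /tsub hst_nth S'_nth; apply: IH.
Qed.

Lemma err_all : forall m, (m < L)%N -> norm2 (hv x th m - g m) <= E.
Proof.
elim/ltn_ind => m IH mL.
have tn : tnorm (tsub (hst x th m) (S' m)) <= E.
  apply: tn_all; first exact: ltnW.
  move=> j jm; apply: IH => //; exact: ltn_trans jm mL.
set v := layer R X d p f0 fm x th2 m (S' m).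
have hvr : norm2 (hv x th m - v) <= rho.
  case: m IH mL tn @v => [|k] IH mL tn /=.
    rewrite /hv /h /=; apply: le_trans (Hf0 _ _) _.
    apply: le_trans Hek0; apply: ler_wpM2l; first by prep; lra.
    by apply: Hth2; rewrite ltnW.
  have thc : norm2 (th k.+1 - th2 k.+1) <= e by apply: Hth2; rewrite ltnW.
  have [A1 A2] := Hnice (k.+1) mL (th2 k.+1) (le_trans thc Heth)
     (hst x th k.+1) (ex_intro2 _ _ x I erefl).
  have A2' := A2 (S' k.+1) (le_trans tn Hesh).
  rewrite /hv /h /=.
  change (norm2 (fm k.+1 (hst x th k.+1) (th k.+1) - fm k.+1 (S' k.+1) (th2 k.+1)) <= rho).
  have T := norm2_tri (fm k.+1 (hst x th k.+1) (th k.+1)) (fm k.+1 (hst x th k.+1) (th2 k.+1))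
     (fm k.+1 (S' k.+1) (th2 k.+1)).
  have B1 := le_trans A1 (mul3_le _ _ _ (ltW Hkth) (norm2_ge0 _) thc
       (max1_ge0 _) (max_tnorm _ (ltnW mL))).
  have B2 := le_trans A2' (ler_wpM2l (ltW Hkh) tn).
  rewrite /E in B2; prep; lra.
have hc : c m v (xi m) = hv x th m by apply: Hrad => //; rewrite norm2B.
rewrite /g -/v -{1}hc.
have H1 := Hc m mL v (xi2 m) (le_trans (Hxi2 m mL) Hexi).
have hB : norm2 (hv x th m) <= B.
  by apply: le_trans (HB x m mL); rewrite le_max lexx.
have nv : norm2 v <= B + rho.
  have := norm2D (hv x th m) (v - hv x th m).
  have -> : hv x th m + (v - hv x th m) = v by rewrite addrC subrK.
  rewrite norm2B; prep; lra.
have mv : Num.max (norm2 v) 1 <= 2 * B.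
  by rewrite ge_max; apply/andP; split; prep; lra.
rewrite mulrAC in H1.
have := le_trans H1 (@mul3 _ _ _ _ _ _ (ltW Hkxi) (norm2_ge0 _) (Hxi2 m mL) (max1_ge0 _) mv).
rewrite /E; prep; lra.
Qed.

Lemma final_bound :
  `|Fcorr R X d L p q f0 fm fL c x th2 xi2 - hL R X d L p f0 fm fL x th| <=
   k_th * e * B + k_h * (2 * k_xi * B * e).
Proof.
have thc : norm2 (th L - th2 L) <= e by apply: Hth2.
have [A1 A2] := HniceL (th2 L) (le_trans thc Heth)
     (hst x th L) (ex_intro2 _ _ x I erefl).
have tn : tnorm (tsub (hst x th L) (S' L)) <= E.
  by apply: tn_all => // j jL; apply: err_all.
have A2' := le_trans (A2 (S' L) (le_trans tn Hesh)) (ler_wpM2l (ltW Hkh) tn).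
have B1 := le_trans A1 (@mul3 _ _ _ _ _ _ (ltW Hkth) (norm2_ge0 _) thc
       (max1_ge0 _) (max_tnorm _ (leqnn L))).
rewrite /Fcorr /hL distrC.
change (`|fL (hst x th L) (th L) - fL (S' L) (th2 L)| <= k_th * e * B + k_h * (2 * k_xi * B * e)).
have T := ler_distD (fL (hst x th L) (th2 L)) (fL (hst x th L) (th L)) (fL (S' L) (th2 L)).
rewrite /E in A2'; prep; lra.
Qed.
End Core.

Lemma term_le_sum (R : realFieldType) n (F : 'I_n -> R) j :
  (forall i, 0 <= F i) -> F j <= \sum_i F i.
Proof. by move=> F0; rewrite (bigD1 j) //= lerDl sumr_ge0. Qed.

Lemma sum_inj_le (R : realFieldType) m n (pi : 'I_m -> 'I_n) (a : 'I_n -> R) :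
  injective pi -> (forall j, 0 <= a j) -> \sum_k a (pi k) <= \sum_j a j.
Proof.
move=> inj a0.
rewrite [X in _ <= X](bigID (fun j => j \in pi @: [set: 'I_m])) /=.
rewrite big_imset /=; last by move=> ? ? _ _; apply: inj.
have -> : \sum_(i in [set: 'I_m]) a (pi i) = \sum_(k < m) a (pi k).
  by apply: eq_bigl => i; rewrite /= in_setT.
rewrite lerDl; exact: sumr_ge0.
Qed.
Lemma sign_contra (R : realFieldType) (Fv F' : R) : (Fv = 1 \/ Fv = -1) ->
  `|F' - Fv| < 1 -> ((nat_of_bool (0 <= Fv))%:R - 2^-1) * F' <= 0 -> False.
Proof.
have t2 : (2^-1 : R) * 2 = 1 by rewrite mulVf // pnatr_eq0.
have tp : (0 : R) < 2^-1 by rewrite invr_gt0 ltr0n.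
case=> ->; rewrite ltr_norml => /andP[a b].
  rewrite ler01 /= => h; nra.
rewrite ler0N1 /= => h; nra.
Qed.

Lemma le_div_mul {R : realFieldType} {e a k : R} : 0 < k -> e <= a / k -> k * e <= a.
Proof.
move=> kp h; have := ler_wpM2l (ltW kp) h.
by rewrite mulrCA divff ?mulr1 // gt_eqF.
Qed.

Lemma norm2_0 (R : realType) n : norm2 (0 : 'rV[R]_n) = 0.
Proof. by rewrite /norm2 big1 ?sqrtr0 // => j _; rewrite mxE expr0n. Qed.

Lemma row_sub_le (R : realType) m n (pi : 'I_m -> 'I_n) (u w : 'rV[R]_n) :
  injective pi ->
  norm2 ((\row_k u 0 (pi k)) - (\row_k (u + w) 0 (pi k))) <= norm2 w.
Proof.
move=> inj; rewrite /norm2; apply: ler_wsqrtr.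
have -> : \sum_(j < m) ((\row_k u 0 (pi k)) - (\row_k (u + w) 0 (pi k))) 0 j ^+ 2
   = \sum_(j < m) (fun i => w 0 i ^+ 2) (pi j).
  apply: eq_bigr => j _; rewrite !mxE /=.
  by rewrite opprD addrA subrr sub0r sqrrN.
apply: sum_inj_le => // j; exact: sqr_ge0.
Qed.

Lemma full_norm_ge (R : realType) L (p q : nat -> nat) (v : Params R p * Params R q) :
  (forall i, (i <= L)%N -> norm2 (v.1 i) <= full_norm R L p q v) /\
  (forall i, (i < L)%N -> norm2 (v.2 i) <= full_norm R L p q v).
Proof.
have s1 : 0 <= \sum_(i < L.+1) norm2 (v.1 i) ^+ 2 by apply: sumr_ge0 => i _; exact: sqr_ge0.
have s2 : 0 <= \sum_(i < L) norm2 (v.2 i) ^+ 2 by apply: sumr_ge0 => i _; exact: sqr_ge0.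
split => i iL; rewrite /full_norm -[norm2 _]ger0_norm ?norm2_ge0 // -sqrtr_sqr;
  apply: ler_wsqrtr.
  have iL' : (i < L.+1)%N by [].
  have := @term_le_sum _ _ (fun j : 'I_L.+1 => norm2 (v.1 j) ^+ 2) (Ordinal iL')
    (fun j => sqr_ge0 _).
  rewrite /=; lra.
have := @term_le_sum _ _ (fun j : 'I_L => norm2 (v.2 j) ^+ 2) (Ordinal iL)
  (fun j => sqr_ge0 _).
rewrite /=; lra.
Qed.

Theorem mainTheorem9 (R : realType) (X : Type) (d L : nat) (p q : nat -> nat)
  (f0 : X -> 'rV[R]_(p 0%N) -> 'rV[R]_d)
  (fm : forall i : nat, ('I_i -> 'rV[R]_d) -> 'rV[R]_(p i) -> 'rV[R]_d)
  (fL : ('I_L -> 'rV[R]_d) -> 'rV[R]_(p L) -> R)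
  (c : forall i : nat, 'rV[R]_d -> 'rV[R]_(q i) -> 'rV[R]_d)
  (th : Params R p) (xi : Params R q)
  (k0 k_th k_h k_xi s_h s_th s_xi B rho : R) :
  (0 < L)%N ->
  0 < k0 -> 0 < k_th -> 0 < k_h -> 0 < k_xi ->
  let hv := h R X d p f0 fm in
  let hst := hstates R X d p f0 fm in
  let F := Fcorr R X d L p q f0 fm fL c in
  (* Condition (C1) *)
  (forall i : nat, (1 <= i < L)%N ->
     nice (fun a b => norm2 (a - b)) (fm i) (th i) k_th k_h s_h s_th
          (range (fun x => hst x th i))) ->
  nice (fun a b : R => `|a - b|) fL (th L) k_th k_h s_h s_th
       (range (fun x => hst x th L)) ->
  (forall (x : X) (th0h : 'rV[R]_(p 0%N)),
     norm2 (f0 x (th 0%N) - f0 x th0h) <= k0 * norm2 (th 0%N - th0h)) ->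
  (forall i : nat, (i < L)%N -> forall (v : 'rV[R]_d) (xih : 'rV[R]_(q i)),
     norm2 (xi i - xih) <= s_xi ->
     norm2 (c i v (xi i) - c i v xih) <= k_xi * Num.max (norm2 v) 1 * norm2 (xi i - xih)) ->
  (* Condition (C2) *)
  (forall x : X, (forall i : nat, (i < L)%N -> Num.max (norm2 (hv x th i)) 1 <= B) /\
                 Num.max `|hL R X d L p f0 fm fL x th| 1 <= B) ->
  (* correction functions of radius rho < 1 *)
  (forall i : nat, (i < L)%N -> forall (x : X) (v : 'rV[R]_d),
     norm2 (v - hv x th i) <= rho -> c i v (xi i) = hv x th i) ->
  rho < 1 ->
  (forall x : X, F x th xi = 1 \/ F x th xi = -1) ->
  let bound :=
    Num.min (B / k0) (Num.min (rho / k0) (Num.min s_th (Num.min s_xi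
    (Num.min (1 / (2 * k_th)) (Num.min (rho / (2 * k_th * B))
    (Num.min (s_h / (2 * k_xi * B)) (Num.min (rho / (4 * B * k_h * k_xi))
    (1 / (4 * k_h * k_xi))))))))) in
  forall x : X,
    (bound%:E <= all_layer_margin (full_add R p q) (full_norm R L p q)
                   (fun x' v => F x' v.1 v.2) (th, xi) x (0 <= F x th xi)%R)%E /\
    (forall (d' : nat) (pi1 : forall i : nat, 'I_(p i) -> 'I_d')
            (pi2 : forall i : nat, 'I_(q i) -> 'I_d') (th' : 'rV[R]_d'),
       (forall i : nat, (i <= L)%N -> injective (pi1 i)) ->
       (forall i : nat, (i < L)%N -> injective (pi2 i)) ->
       (forall i : nat, (i <= L)%N -> tau1 R p d' pi1 th' i = th i) ->
       (forall i : nat, (i < L)%N -> tau2 R q d' pi2 th' i = xi i) ->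
       let F' := fun (x' : X) (t : 'rV[R]_d') =>
                   F x' (tau1 R p d' pi1 t) (tau2 R q d' pi2 t) in
       (bound%:E <= all_layer_margin (fun a b : 'rV[R]_d' => (a + b)%R) norm2
                      F' th' x (0 <= F' x th')%R)%E).
Proof.
move=> L0 k0p kthp khp kxip hv hst F Hnice HniceL Hf0 Hc HC2 Hrad rho1 HF bound x.
have B1 : 1 <= B by apply: le_trans (HC2 x).2; rewrite le_max lexx orbT.
have [b0|bpos] := lerP bound 0.
  split.
    apply: le_ereal_inf_tmp => _ [delta _ <-]; rewrite lee_fin.
    exact: le_trans b0 (sqrtr_ge0 _).
  move=> d' pi1 pi2 th' _ _ _ _; cbv beta zeta.
  apply: le_ereal_inf_tmp => _ [delta _ <-]; rewrite lee_fin.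
  exact: le_trans b0 (norm2_ge0 _).
have core : forall th2 xi2 e, 0 <= e -> e <= bound ->
   (forall i, (i <= L)%N -> norm2 (th i - th2 i) <= e) ->
   (forall i, (i < L)%N -> norm2 (xi i - xi2 i) <= e) ->
   `|F x th2 xi2 - hL R X d L p f0 fm fL x th| <= k_th * e * B + k_h * (2 * k_xi * B * e)
   /\ k_th * e * B + k_h * (2 * k_xi * B * e) <= rho.
  move=> th2 xi2 e e0 eb Ht Hx.
  move: eb; rewrite /bound !le_min => /andP[_ /andP[b2 /andP[b3 /andP[b4
      /andP[_ /andP[b6 /andP[b7 /andP[b8 _]]]]]]]].
  have Bp : 0 < B by lra.
  have h1 := le_div_mul k0p b2.
  have h6 := le_div_mul (mulr_gt0 (mulr_gt0 (ltr0n _ 2) kthp) Bp) b6.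
  have h7 := le_div_mul (mulr_gt0 (mulr_gt0 (ltr0n _ 2) kxip) Bp) b7.
  have h8 := le_div_mul (mulr_gt0 (mulr_gt0 (mulr_gt0 (ltr0n _ 4) Bp) khp) kxip) b8.
  split; last by lra.
  apply: (@final_bound _ _ _ _ _ _ _ _ _ _ _ _ _ _ _ _ _ _ _ _ _
     Hnice HniceL Hf0 Hc (fun x => (HC2 x).1) Hrad rho1 B1 k0p kthp khp kxip
     x th2 xi2 e e0 h1 b3 b4) => //; lra.
have FF : F x th xi = hL R X d L p f0 fm fL x th.
  have [c1 _] := core th xi 0 (lexx 0) (ltW bpos)
     ltac:(by move=> i _; rewrite subrr norm2_0) ltac:(by move=> i _; rewrite subrr norm2_0).
  by move: c1; rewrite !(mulr0, mul0r) addr0 normr_le0 subr_eq0 => /eqP.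
split.
  apply: le_ereal_inf_tmp => _ [delta Hd <-]; rewrite lee_fin leNgt; apply/negP => lt.
  have [fn1 fn2] := full_norm_ge R L p q delta.
  have g1 : forall i, (i <= L)%N -> norm2 (th i - (full_add R p q (th, xi) delta).1 i)
     <= full_norm R L p q delta.
    move=> i iL; rewrite /= opprD addrA subrr sub0r norm2N; exact: fn1.
  have g2 : forall i, (i < L)%N -> norm2 (xi i - (full_add R p q (th, xi) delta).2 i)
     <= full_norm R L p q delta.
    move=> i iL; rewrite /= opprD addrA subrr sub0r norm2N; exact: fn2.
  have [c1 c2] := core (full_add R p q (th, xi) delta).1 (full_add R p q (th, xi) delta).2
     (full_norm R L p q delta) (sqrtr_ge0 _) (ltW lt) g1 g2.
  move: Hd; rewrite /mkset /= => Hd.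
  apply: (@sign_contra _ _ _ (HF x) _ Hd); rewrite FF; lra.
move=> d' pi1 pi2 th' inj1 inj2 Ht1 Ht2; cbv beta zeta.
have E1 : F x (tau1 R p d' pi1 th') (tau2 R q d' pi2 th') = F x th xi.
  rewrite FF.
  have [c1 _] := core (tau1 R p d' pi1 th') (tau2 R q d' pi2 th') 0 (lexx 0) (ltW bpos)
     ltac:(by move=> i iL; rewrite (Ht1 i iL) subrr norm2_0)
     ltac:(by move=> i iL; rewrite (Ht2 i iL) subrr norm2_0).
  by move: c1; rewrite !(mulr0, mul0r) addr0 normr_le0 subr_eq0 => /eqP.
apply: le_ereal_inf_tmp => _ [delta Hd <-]; rewrite lee_fin leNgt; apply/negP => lt.
move: Hd; rewrite /mkset /= E1 => Hd.
have g1 : forall i, (i <= L)%N -> norm2 (th i - tau1 R p d' pi1 (th' + delta) i) <= norm2 delta.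
  move=> i iL; rewrite -(Ht1 i iL); exact: row_sub_le (inj1 i iL).
have g2 : forall i, (i < L)%N -> norm2 (xi i - tau2 R q d' pi2 (th' + delta) i) <= norm2 delta.
  move=> i iL; rewrite -(Ht2 i iL); exact: row_sub_le (inj2 i iL).
have [c1 c2] := core (tau1 R p d' pi1 (th' + delta)) (tau2 R q d' pi2 (th' + delta))
   (norm2 delta) (norm2_ge0 _) (ltW lt) g1 g2.
apply: (@sign_contra _ _ _ (HF x) _ Hd); rewrite FF; lra.
Qed.
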